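(* Let $\mathbf{s}=\{1/n : n\in\mathbb{N}\}\cup\{0\}\subset\mathbb{R}$. Then the free locally convex space $L(\mathbf{s})$ is topologically isomorphic (as a locally convex space) to the Graev free locally convex space $L_G(\mathbf{s})$; more precisely, with $\mathbf{s}^\ast=\mathbf{s}\setminus\{1\}$, one has $L_G(\mathbf{s})\cong L_G(\{1\})\oplus L_G(\mathbf{s}^\ast)\cong\mathbb{R}\oplus L_G(\mathbf{s})\cong L(\mathbf{s})$.
   Context: All vector spaces are real. For a Tychonoff space $X$, the free locally convex space $L(X)$ is a locally convex space with a continuous map $i:X\to L(X)$ such that every continuous map $f$ from $X$ into a locally convex space $E$ extends uniquely to a continuous linear $\bar f:L(X)\to E$ with $f=\bar f\circ i$. For a Tychonoff space $X$ with distinguished point $e$, the Graev free locally convex space $L_G(X)$ is a locally convex space with a continuous map $i:X\to L_G(X)$, $i(e)=0$, such that every continuous map $f$ from $X$ into a locally convex space $E$ with $f(e)=0$ extends uniquely to a continuous linear $\bar f:L_G(X)\to E$ with $f=\bar f\circ i$; it is independent of the choice of $e$ up to isomorphism, and algebraically it is the free vector space on $X\setminus\{e\}$. It is known that $L(X)\cong\mathbb{R}\oplus L_G(X)$ for every Tychonoff $X$, and that $L_G$ of a topological disjoint union of two spaces is the direct sum of the $L_G$'s. *)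

(* Defs.v *)
From Stdlib Require Import Reals Lra.
Open Scope R_scope.

Record topology (T : Type) := Topology {
  is_open : (T -> Prop) -> Prop;
  open_all : is_open (fun _ => True);
  open_inter : forall U V, is_open U -> is_open V -> is_open (fun x => U x /\ V x);
  open_union : forall (F : (T -> Prop) -> Prop),
      (forall U, F U -> is_open U) -> is_open (fun x => exists U, F U /\ U x)
}.
Arguments is_open {T} t U.

Definition continuous {X Y : Type} (tX : topology X) (tY : topology Y)
  (f : X -> Y) : Prop :=
  forall V, is_open tY V -> is_open tX (fun x => V (f x)).

Record LCS := MkLCS {
  lc_car :> Type;
  lc_zero : lc_car;
  lc_add : lc_car -> lc_car -> lc_car;
  lc_opp : lc_car -> lc_car;
  lc_scal : R -> lc_car -> lc_car;
  lc_addA : forall x y z, lc_add x (lc_add y z) = lc_add (lc_add x y) z;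
  lc_addC : forall x y, lc_add x y = lc_add y x;
  lc_add0 : forall x, lc_add x lc_zero = x;
  lc_addN : forall x, lc_add x (lc_opp x) = lc_zero;
  lc_scalA : forall a b x, lc_scal a (lc_scal b x) = lc_scal (a * b) x;
  lc_scal1 : forall x, lc_scal 1 x = x;
  lc_scalDr : forall a x y, lc_scal a (lc_add x y) = lc_add (lc_scal a x) (lc_scal a y);
  lc_scalDl : forall a b x, lc_scal (a + b) x = lc_add (lc_scal a x) (lc_scal b x);
  lc_top : topology lc_car;
  lc_add_cont : forall x y U, is_open lc_top U -> U (lc_add x y) ->
      exists V W, is_open lc_top V /\ V x /\ is_open lc_top W /\ W y /\
        forall u v, V u -> W v -> U (lc_add u v);
  lc_scal_cont : forall a x U, is_open lc_top U -> U (lc_scal a x) ->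
      exists eps, 0 < eps /\ exists V, is_open lc_top V /\ V x /\
        forall b z, Rabs (b - a) < eps -> V z -> U (lc_scal b z);
  lc_loc_convex : forall U, is_open lc_top U -> U lc_zero ->
      exists V, is_open lc_top V /\ V lc_zero /\
        (forall x y t, V x -> V y -> 0 <= t <= 1 ->
           V (lc_add (lc_scal t x) (lc_scal (1 - t) y))) /\
        (forall z, V z -> U z)
}.

Definition lc_linear {E F : LCS} (g : E -> F) : Prop :=
  (forall x y, g (lc_add E x y) = lc_add F (g x) (g y)) /\
  (forall a x, g (lc_scal E a x) = lc_scal F a (g x)).

Definition lcs_iso (E F : LCS) : Prop :=
  exists (T : E -> F) (S : F -> E),
    lc_linear T /\ continuous (lc_top E) (lc_top F) T /\
    lc_linear S /\ continuous (lc_top F) (lc_top E) S /\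
    (forall x, S (T x) = x) /\ (forall y, T (S y) = y).

Definition is_free_lcs {X : Type} (tX : topology X) (E : LCS) (i : X -> E) : Prop :=
  continuous tX (lc_top E) i /\
  forall (F : LCS) (f : X -> F), continuous tX (lc_top F) f ->
    exists g : E -> F,
      lc_linear g /\ continuous (lc_top E) (lc_top F) g /\
      (forall x, g (i x) = f x) /\
      (forall h : E -> F, lc_linear h -> continuous (lc_top E) (lc_top F) h ->
         (forall x, h (i x) = f x) -> forall v, h v = g v).

Definition is_graev_free_lcs {X : Type} (tX : topology X) (e : X)
  (E : LCS) (i : X -> E) : Prop :=
  continuous tX (lc_top E) i /\ i e = lc_zero E /\
  forall (F : LCS) (f : X -> F), continuous tX (lc_top F) f -> f e = lc_zero F ->
    exists g : E -> F,
      lc_linear g /\ continuous (lc_top E) (lc_top F) g /\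
      (forall x, g (i x) = f x) /\
      (forall h : E -> F, lc_linear h -> continuous (lc_top E) (lc_top F) h ->
         (forall x, h (i x) = f x) -> forall v, h v = g v).

Definition in_s (x : R) : Prop := x = 0 \/ exists n : nat, x = / INR (S n).

Definition s_space : Type := { x : R | in_s x }.

Definition s_open (U : s_space -> Prop) : Prop :=
  forall x, U x -> exists eps, 0 < eps /\
    forall y : s_space, Rabs (proj1_sig y - proj1_sig x) < eps -> U y.

Lemma s_open_all : s_open (fun _ => True).
Proof. intros x _. exists 1. split; [lra | auto]. Qed.

Lemma s_open_inter : forall U V, s_open U -> s_open V -> s_open (fun x => U x /\ V x).
Proof.
  intros U V HU HV x [Ux Vx].
  destruct (HU x Ux) as [e1 [He1 H1]]. destruct (HV x Vx) as [e2 [He2 H2]].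
  exists (Rmin e1 e2). split.
  - apply Rmin_pos; assumption.
  - intros y Hy. split.
    + apply H1. eapply Rlt_le_trans; [exact Hy | apply Rmin_l].
    + apply H2. eapply Rlt_le_trans; [exact Hy | apply Rmin_r].
Qed.

Lemma s_open_union : forall (F : (s_space -> Prop) -> Prop),
  (forall U, F U -> s_open U) -> s_open (fun x => exists U, F U /\ U x).
Proof.
  intros F HF x [U [FU Ux]].
  destruct (HF U FU x Ux) as [e [He H]].
  exists e. split; [exact He|]. intros y Hy. exists U. split; auto.
Qed.

Definition s_top : topology s_space :=
  Topology s_space s_open s_open_all s_open_inter s_open_union.

(* Main.v *)
Require Import Defs.
From Stdlib Require Import Reals Lra Lia Classical FunctionalExtensionality PropExtensionality.
Open Scope R_scope.

Lemma s_eq (a b : s_space) : proj1_sig a = proj1_sig b -> a = b.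
Proof.
  destruct a as [a pa], b as [b pb]; simpl; intros ->.
  f_equal; apply proof_irrelevance.
Qed.

Lemma INRS_pos n : 0 < INR (S n).
Proof. apply lt_0_INR; lia. Qed.

Lemma in_s_nonneg x : in_s x -> 0 <= x.
Proof.
  intros [->|[n ->]]; [lra|]. left; apply Rinv_0_lt_compat, INRS_pos.
Qed.

Lemma in_s_half x : in_s x -> x <> 1 -> x <= 1/2.
Proof.
  intros [->|[n ->]] H; [lra|]. destruct n as [|m].
  - exfalso; apply H; simpl; apply Rinv_1.
  - replace (1/2) with (/2) by field. apply Rinv_le_contravar; [lra|].
    rewrite !S_INR. pose proof (pos_INR m). lra.
Qed.

Definition sigr (x : R) : R := x / (1 + x).
Definition taur (x : R) : R := if Req_dec_T x 1 then 1 else x / (1 - x).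

Lemma sigr_in x : in_s x -> in_s (sigr x).
Proof.
  unfold sigr. intros [->|[n ->]].
  - left. field.
  - right. exists (S n). pose proof (INRS_pos n). rewrite (S_INR (S n)). field. lra.
Qed.

Lemma taur_in x : in_s x -> in_s (taur x).
Proof.
  unfold taur. destruct (Req_dec_T x 1) as [E|E].
  - intros _. right. exists O. simpl. rewrite Rinv_1. reflexivity.
  - intros [->|[n ->]].
    + left. field.
    + destruct n as [|m].
      * exfalso; apply E; simpl; apply Rinv_1.
      * right. exists m. pose proof (INRS_pos m). rewrite (S_INR (S m)). field. lra.
Qed.

Definition sig_s (x : s_space) : s_space := exist _ (sigr (proj1_sig x)) (sigr_in _ (proj2_sig x)).
Definition tau_s (x : s_space) : s_space := exist _ (taur (proj1_sig x)) (taur_in _ (proj2_sig x)).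
Definition one_s : s_space := exist _ 1 (or_intror (ex_intro _ O (eq_sym Rinv_1))).

Lemma sig_ne1 x : proj1_sig (sig_s x) <> 1.
Proof.
  simpl. pose proof (in_s_nonneg _ (proj2_sig x)). unfold sigr. intro Hc.
  assert (proj1_sig x / (1 + proj1_sig x) * (1 + proj1_sig x) = proj1_sig x) by (field; lra).
  rewrite Hc in H0. lra.
Qed.

Lemma tau_sig x : tau_s (sig_s x) = x.
Proof.
  apply s_eq. pose proof (sig_ne1 x) as H. simpl in *. unfold taur.
  destruct (Req_dec_T (sigr (proj1_sig x)) 1); [contradiction|].
  pose proof (in_s_nonneg _ (proj2_sig x)). unfold sigr in *. field. lra.
Qed.

Lemma sig_tau y : proj1_sig y <> 1 -> sig_s (tau_s y) = y.
Proof.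
  intro H. apply s_eq. simpl. unfold taur.
  destruct (Req_dec_T (proj1_sig y) 1); [contradiction|].
  unfold sigr. field. split; lra.
Qed.

Lemma sig_cont : continuous s_top s_top sig_s.
Proof.
  intros V HV x Vx. destruct (HV _ Vx) as [e [He H]].
  exists e. split; [exact He|]. intros y Hy. apply H. simpl.
  pose proof (in_s_nonneg _ (proj2_sig x)). pose proof (in_s_nonneg _ (proj2_sig y)).
  set (a := proj1_sig x) in *. set (b := proj1_sig y) in *.
  unfold sigr. assert (Hd : (b/(1+b) - a/(1+a)) * ((1+b)*(1+a)) = b - a) by (field; lra).
  assert (Rabs (b/(1+b) - a/(1+a)) * ((1+b)*(1+a)) = Rabs (b-a)).
  { rewrite <- Hd, Rabs_mult, (Rabs_pos_eq ((1+b)*(1+a))) by nra. reflexivity. }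
  assert (0 <= Rabs (b/(1+b) - a/(1+a))) by apply Rabs_pos.
  assert (Rabs (b/(1+b) - a/(1+a)) <= Rabs (b/(1+b) - a/(1+a)) * ((1+b)*(1+a))).
  { assert (1 <= (1+b)*(1+a)) by nra. rewrite <- (Rmult_1_r (Rabs _)) at 1. apply Rmult_le_compat_l; assumption. }
  lra.
Qed.

Section Alg.
Variable E : LCS.
Notation add := (lc_add E). Notation scal := (lc_scal E). Notation z := (lc_zero E).

Lemma add0l x : add z x = x.
Proof. rewrite lc_addC; apply lc_add0. Qed.

Lemma add_cancel x y w : add x y = add x w -> y = w.
Proof.
  intro H. rewrite <- (add0l y), <- (add0l w), <- (lc_addN E x), (lc_addC E x (lc_opp E x)),
    <- !lc_addA, H. reflexivity.
Qed.

Lemma scal0 x : scal 0 x = z.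
Proof.
  apply (add_cancel (scal 0 x)). rewrite lc_add0, <- lc_scalDl, Rplus_0_r. reflexivity.
Qed.

Lemma scalz a : scal a z = z.
Proof. rewrite <- (scal0 z), lc_scalA, Rmult_0_r. reflexivity. Qed.

Definition sub x y := add x (scal (-1) y).

Lemma subxx x : sub x x = z.
Proof.
  unfold sub. rewrite <- (lc_scal1 E x) at 1. rewrite <- lc_scalDl.
  replace (1 + -1) with 0 by ring. apply scal0.
Qed.

Lemma sub_key a c : sub (sub a c) (sub z c) = a.
Proof.
  unfold sub. rewrite add0l, lc_scalA. replace (-1 * -1) with 1 by ring.
  rewrite <- lc_addA, <- lc_scalDl.
  replace (-1 + 1) with 0 by ring. rewrite scal0. apply lc_add0.
Qed.
End Alg.
Arguments sub {E}.

Lemma lin0 {E F : LCS} (g : E -> F) : lc_linear g -> g (lc_zero E) = lc_zero F.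
Proof.
  intros [_ Hs]. rewrite <- (scal0 E (lc_zero E)), Hs. apply scal0.
Qed.

Lemma lin_sub {E F : LCS} (g : E -> F) x y : lc_linear g -> g (sub x y) = sub (g x) (g y).
Proof. intros [Ha Hs]. unfold sub. rewrite Ha, Hs. reflexivity. Qed.

Lemma lin_comp {E F G : LCS} (g : E -> F) (h : F -> G) :
  lc_linear g -> lc_linear h -> lc_linear (fun v => h (g v)).
Proof.
  intros [Ga Gs] [Ha Hs]. split; intros; rewrite ?Ga, ?Gs, ?Ha, ?Hs; reflexivity.
Qed.

Lemma lin_id (E : LCS) : lc_linear (fun v : E => v).
Proof. split; reflexivity. Qed.

Lemma open_nbhd {T} (t : topology T) (A : T -> Prop) :
  (forall x, A x -> exists V, is_open t V /\ V x /\ forall y, V y -> A y) -> is_open t A.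
Proof.
  intro H.
  assert (EA : A = fun x => exists U, (is_open t U /\ forall y, U y -> A y) /\ U x).
  { apply functional_extensionality; intro x; apply propositional_extensionality; split.
    - intro Ax. destruct (H x Ax) as [V [HV [Vx HVA]]]. exists V; auto.
    - intros [U [[_ HU] Ux]]. auto. }
  rewrite EA. apply open_union. intros U [HU _]; exact HU.
Qed.

Lemma cont_comp {X Y Z} (tX : topology X) (tY : topology Y) (tZ : topology Z) f g :
  continuous tX tY f -> continuous tY tZ g -> continuous tX tZ (fun x => g (f x)).
Proof. intros Hf Hg V HV. apply (Hf _ (Hg _ HV)). Qed.

Lemma cont_id {X} (tX : topology X) : continuous tX tX (fun x => x).
Proof. intros V HV. exact HV. Qed.

Lemma cont_const {X} (tX : topology X) (F : LCS) (c : F) :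
  continuous tX (lc_top F) (fun _ => c).
Proof.
  intros U HU. apply open_nbhd. intros x Ux. exists (fun _ => True).
  split; [apply open_all|]. auto.
Qed.

Lemma cont_add {X} (tX : topology X) (F : LCS) f g :
  continuous tX (lc_top F) f -> continuous tX (lc_top F) g ->
  continuous tX (lc_top F) (fun x => lc_add F (f x) (g x)).
Proof.
  intros Hf Hg U HU. apply open_nbhd. intros x Ux.
  destruct (lc_add_cont F _ _ _ HU Ux) as [V [W [HV [Vx [HW [Wx HVW]]]]]].
  exists (fun y => V (f y) /\ W (g y)). split.
  - apply open_inter; [apply Hf|apply Hg]; assumption.
  - split; [auto|]. intros y [? ?]; auto.
Qed.

Lemma cont_scal {X} (tX : topology X) (F : LCS) a f :
  continuous tX (lc_top F) f -> continuous tX (lc_top F) (fun x => lc_scal F a (f x)).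
Proof.
  intros Hf U HU. apply open_nbhd. intros x Ux.
  destruct (lc_scal_cont F _ _ _ HU Ux) as [e [He [V [HV [Vx HVU]]]]].
  exists (fun y => V (f y)). split; [apply Hf; assumption|]. split; [auto|].
  intros y Vy. apply HVU; [|assumption]. rewrite Rminus_diag, Rabs_R0. exact He.
Qed.

Lemma cont_sub {X} (tX : topology X) (F : LCS) f g :
  continuous tX (lc_top F) f -> continuous tX (lc_top F) g ->
  continuous tX (lc_top F) (fun x => sub (f x) (g x)).
Proof. intros. unfold sub. apply cont_add; [|apply cont_scal]; assumption. Qed.

Definition rho_s (E : LCS) (i : s_space -> E) (y : s_space) : E :=
  if Req_dec_T (proj1_sig y) 1 then lc_zero E else i (tau_s y).

Lemma rho_cont (E : LCS) (i : s_space -> E) :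
  continuous s_top (lc_top E) i -> continuous s_top (lc_top E) (rho_s E i).
Proof.
  intros Hi V HV x Vx. unfold rho_s in Vx.
  destruct (Req_dec_T (proj1_sig x) 1) as [E1|E1].
  - exists (1/2). split; [lra|]. intros y Hy.
    assert (Ey : proj1_sig y = 1).
    { destruct (Req_dec_T (proj1_sig y) 1) as [?|N]; [assumption|].
      pose proof (in_s_half _ (proj2_sig y) N). rewrite E1 in Hy.
      pose proof (Rle_abs (proj1_sig y - 1)). pose proof (Rle_abs (-(proj1_sig y - 1))).
      rewrite Rabs_Ropp in *. lra. }
    unfold rho_s. destruct (Req_dec_T (proj1_sig y) 1); [exact Vx|contradiction].
  - destruct (Hi V HV _ Vx) as [e [He H]].
    exists (Rmin (1/4) (e/16)). split.
    { apply Rmin_pos; lra. }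
    intros y Hy.
    assert (Hy1 : Rabs (proj1_sig y - proj1_sig x) < 1/4) by (eapply Rlt_le_trans; [exact Hy|apply Rmin_l]).
    assert (Hy2 : Rabs (proj1_sig y - proj1_sig x) < e/16) by (eapply Rlt_le_trans; [exact Hy|apply Rmin_r]).
    pose proof (in_s_half _ (proj2_sig x) E1).
    assert (Hyb : proj1_sig y <= 3/4).
    { pose proof (Rle_abs (proj1_sig y - proj1_sig x)). lra. }
    unfold rho_s. destruct (Req_dec_T (proj1_sig y) 1) as [E2|E2]; [lra|].
    apply H. simpl. unfold taur.
    destruct (Req_dec_T (proj1_sig y) 1); [contradiction|].
    destruct (Req_dec_T (proj1_sig x) 1); [contradiction|].
    set (a := proj1_sig x) in *. set (b := proj1_sig y) in *.
    assert (Hd : (b/(1-b) - a/(1-a)) * ((1-b)*(1-a)) = b - a) by (field; lra).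
    assert (Habs : Rabs (b/(1-b) - a/(1-a)) * ((1-b)*(1-a)) = Rabs (b-a)).
    { rewrite <- Hd, Rabs_mult, (Rabs_pos_eq ((1-b)*(1-a))) by nra. reflexivity. }
    assert (0 <= Rabs (b/(1-b) - a/(1-a))) by apply Rabs_pos.
    assert (1/16 <= (1-b)*(1-a)) by nra.
    assert (Rabs (b/(1-b) - a/(1-a)) * (1/16) <= Rabs (b-a)).
    { rewrite <- Habs. apply Rmult_le_compat_l; assumption. }
    lra.
Qed.

Theorem mainTheorem2 :
  forall (E1 : LCS) (i1 : s_space -> E1), is_free_lcs s_top E1 i1 ->
  forall (e : s_space) (E2 : LCS) (i2 : s_space -> E2),
    is_graev_free_lcs s_top e E2 i2 ->
  lcs_iso E1 E2.
Proof.
  intros E1 i1 [Hi1 U1] e E2 i2 [Hi2 [Hi2e U2]].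
  set (f := fun x => sub (i2 (sig_s x)) (i2 one_s)).
  assert (Hf : continuous s_top (lc_top E2) f).
  { apply cont_sub; [apply (cont_comp _ _ _ _ _ sig_cont Hi2)|apply cont_const]. }
  destruct (U1 E2 f Hf) as [T [TL [TC [Tf _]]]].
  set (h := fun y => sub (rho_s E1 i1 y) (rho_s E1 i1 e)).
  assert (Hh : continuous s_top (lc_top E1) h).
  { apply cont_sub; [apply rho_cont, Hi1|apply cont_const]. }
  assert (he : h e = lc_zero E1) by apply subxx.
  destruct (U2 E1 h Hh he) as [S [SL [SC [Sh _]]]].
  assert (rho1 : rho_s E1 i1 one_s = lc_zero E1).
  { unfold rho_s. destruct (Req_dec_T (proj1_sig one_s) 1) as [_|N]; [reflexivity|].
    exfalso; apply N; reflexivity. }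
  assert (rhosig : forall x, rho_s E1 i1 (sig_s x) = i1 x).
  { intro x. unfold rho_s. destruct (Req_dec_T (proj1_sig (sig_s x)) 1) as [C|_].
    - exfalso; exact (sig_ne1 x C).
    - rewrite tau_sig. reflexivity. }
  assert (Trho : forall y, T (rho_s E1 i1 y) = sub (i2 y) (i2 one_s)).
  { intro y. unfold rho_s. destruct (Req_dec_T (proj1_sig y) 1) as [C|C].
    - rewrite (lin0 T TL). replace y with one_s by (apply s_eq; simpl; congruence).
      symmetry; apply subxx.
    - rewrite Tf. unfold f. rewrite sig_tau by exact C. reflexivity. }
  exists T, S. split; [exact TL|]. split; [exact TC|]. split; [exact SL|]. split; [exact SC|].
  split.
  - destruct (U1 E1 i1 Hi1) as [g [_ [_ [_ Ug]]]].
    intro v. rewrite (Ug (fun v => S (T v)) (lin_comp T S TL SL) (cont_comp _ _ _ _ _ TC SC)).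
    + symmetry. apply (Ug (fun v => v) (lin_id E1) (cont_id _)). reflexivity.
    + intro x. rewrite Tf. unfold f. rewrite (lin_sub S _ _ SL), !Sh. unfold h.
      rewrite rhosig, rho1. apply sub_key.
  - destruct (U2 E2 i2 Hi2 Hi2e) as [g [_ [_ [_ Ug]]]].
    intro v. rewrite (Ug (fun v => T (S v)) (lin_comp S T SL TL) (cont_comp _ _ _ _ _ SC TC)).
    + symmetry. apply (Ug (fun v => v) (lin_id E2) (cont_id _)). reflexivity.
    + intro y. rewrite Sh. unfold h. rewrite (lin_sub T _ _ TL), !Trho, Hi2e. apply sub_key.
Qed.
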